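(* Let $K$ be a finitely generated field of characteristic $0$, let $\lambda$ be the number of roots of unity contained in $K$, let $\overline{K}$ be an algebraic closure of $K$, and let $$\Gamma:=\{x\in\overline{K}^\times : x^n\in K^\times \text{ for some integer } n>0\}.$$ Let $\alpha_1,\dots,\alpha_s\in\Gamma$ be such that $\alpha_1+\cdots+\alpha_s=1$ and no proper subsum of $\alpha_1+\cdots+\alpha_s$ vanishes. Then there exist roots of unity $\xi_1,\dots,\xi_s\in\overline{K}^\times$ such that $\alpha_i^\lambda\xi_i\in K$ for each $i=1,\dots,s$.
   Context: A proper subsum means $\sum_{i\in I}\alpha_i$ for a nonempty subset $I\subsetneq\{1,\dots,s\}$. *)

(* Defs.v *)
From HB Require Import structures.
From mathcomp Require Import all_boot all_order all_algebra.
Set Implicit Arguments. Unset Strict Implicit. Unset Printing Implicit Defensive.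
Import Order.TTheory GRing.Theory Num.Theory.
Local Open Scope ring_scope.

Definition is_root_of_unity (F : nzRingType) (x : F) : Prop :=
  exists n : nat, (0 < n)%N /\ x ^+ n = 1.

(* K is finitely generated as a field (over its prime field): there is a finite
   list of elements such that every subfield of K containing them is all of K. *)
Definition fin_gen_field (K : fieldType) : Prop :=
  exists s : seq K, forall S : pred K,
    (1 \in S) ->
    (forall x y, x \in S -> y \in S -> x - y \in S) ->
    (forall x y, x \in S -> y \in S -> x * y \in S) ->
    (forall x, x \in S -> x^-1 \in S) ->
    {subset s <= S} -> forall x, x \in S.

Definition is_alg_closure (K : fieldType) (Kbar : closedFieldType)
  (iota : {rmorphism K -> Kbar}) : Prop :=
  forall x : Kbar, exists p : {poly K}, p != 0 /\ root (map_poly iota p) x.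

Definition num_roots_of_unity (K : fieldType) (lam : nat) : Prop :=
  exists s : seq K, uniq s /\ size s = lam /\
    forall x, x \in s <-> is_root_of_unity x.

Definition in_Gamma (K : fieldType) (Kbar : closedFieldType)
  (iota : {rmorphism K -> Kbar}) (x : Kbar) : Prop :=
  x != 0 /\ exists n : nat, (0 < n)%N /\ exists y : K, y != 0 /\ x ^+ n = iota y.

(* Main.v *)
Require Import Defs.
From Stdlib Require Import Classical.
From HB Require Import structures.
From mathcomp Require Import all_boot all_order all_algebra all_fingroup all_solvable all_field.
Import Order.TTheory GRing.Theory Num.Theory.
Local Open Scope ring_scope.

Lemma rou_neq0 (F : nzRingType) (x : F) n : (0 < n)%N -> x ^+ n = 1 -> x != 0.
Proof. by move=> n0 xn; apply/eqP => x0; move: xn; rewrite x0 expr0n gtn_eqF // => /eqP; rewrite eq_sym oner_eq0. Qed.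

Lemma rou_dvd (K : fieldType) lam (hK : num_roots_of_unity K lam) g (c : K) :
  g.-primitive_root c -> (g %| lam)%N.
Proof.
case: hK => s [us [sz hs]] pc.
have g0 := prim_order_gt0 pc.
have c1 : c ^+ g = 1 := prim_expr_order pc.
have cn0 : c != 0 by apply: rou_neq0 g0 c1.
have rs x : x \in s -> x != 0.
  by move=> /hs [n [n0 xn]]; apply: rou_neq0 n0 xn.
have hsub : {subset map (fun x => c * x) s <= s}.
  move=> y /mapP [x /hs [n [n0 xn]] ->]; apply/hs; exists (g * n)%N; split.
    by rewrite muln_gt0 g0.
  by rewrite exprMn exprM c1 expr1n mul1r mulnC exprM xn expr1n.
have um : uniq (map (fun x => c * x) s) by rewrite map_inj_uniq //; exact: mulfI.
have [_ eqs] := uniq_min_size um hsub (eq_leq (esym (size_map _ _))).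
have pe : perm_eq (map (fun x => c * x) s) s by apply: uniq_perm.
have := perm_big _ pe (F := fun x => x) (op := *%R) (x := 1) (P := xpredT).
have pc' : \prod_(i <- s) c = c ^+ size s.
  by elim: (s) => [|x t IH]; rewrite ?big_nil ?expr0 // big_cons IH exprS.
rewrite big_map big_split /= pc' sz => /eqP.
rewrite -{2}[\prod_(i <- s) i]mul1r (inj_eq (mulIf _)); last first.
  by rewrite prodf_seq_neq0; apply/allP => x /rs.
by rewrite -(prim_order_dvd pc).
Qed.

Section Core.
Variables (K : fieldType) (L : splittingFieldType K).
Hypothesis pchar0 : [pchar K] =i pred0.
Variables (N : nat) (z : L).
Hypothesis pz : N.-primitive_root z.

Lemma pcharL : [pchar L] =i pred0.
Proof. by move=> p; rewrite pchar_lalg pchar0. Qed.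

Lemma galL : galois 1 {:L}.
Proof.
apply/and3P; split; first exact: sub1v.
  by apply/separableP => y _; apply: (pcharf0_separable _ pcharL).
exact: normalFieldf.
Qed.

Lemma N_gt0 : (0 < N)%N. Proof. exact: prim_order_gt0 pz. Qed.

Lemma z_neq0 : z != 0.
Proof.
apply/eqP => z0; have := prim_expr_order pz; rewrite z0 expr0n gtn_eqF ?N_gt0 //.
by move/eqP; rewrite eq_sym oner_eq0.
Qed.

Lemma cocycle {K0 : {subfield L}} {s : gal_of {:L}} {a} :
  s \in 'Gal({:L} / K0)%g -> a != 0 -> a ^+ N \in K0 ->
  exists k : nat, s a = z ^+ k * a.
Proof.
move=> hs a0 aN.
have e : (s a / a) ^+ N = 1.
  have fa : s (a ^+ N) = a ^+ N := fixed_gal (subvf _) hs aN.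
  by rewrite expr_div_n -rmorphXn /= fa divff // expf_neq0.
have [k hk] := prim_rootP pz e; exists k; by rewrite -hk divfK.
Qed.


Definition Fz : {subfield L} := <<1; z>>%AS.

Lemma z_Fz : z \in Fz. Proof. exact: memv_adjoin. Qed.

Lemma galFz : galois Fz {:L}.
Proof. by apply: galoisS galL; rewrite sub1v subvf. Qed.

Lemma stepA (s : nat) (a : 'I_s -> L) :
  (forall i, a i != 0) -> (forall i, a i ^+ N \in 1%VS) ->
  \sum_(i < s) a i = 1 ->
  (forall I : {set 'I_s}, I != set0 -> I != setT -> \sum_(i in I) a i != 0) ->
  forall i, a i \in Fz.
Proof.
move=> a0 aN asum nd.
pose H := 'Gal({:L} / Fz)%g.
have aNF i : a i ^+ N \in Fz by apply: subvP (aN i); apply: sub1v.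
pose I := [set i | a i \in Fz].
have S1 i : i \notin I -> \sum_(x in H) x (a i) = 0.
  rewrite inE => aF.
  have [t tH ta] : exists2 t, t \in H & t (a i) != a i.
    apply/exists_inP; apply: contraR aF; rewrite negb_exists_in => /forall_inP hall.
    rewrite -(galois_fixedField galFz); apply/fixedFieldP; first exact: memvf.
    by move=> x /hall; rewrite negbK => /eqP.
  have [m hm] := cocycle tH (a0 i) (aNF i).
  set S := \sum_(x in H) x (a i).
  have e1 : t S = S.
    rewrite rmorph_sum /=.
    rewrite [RHS](reindex_inj (mulIg t)) /=.
    apply: eq_big => x; first by rewrite groupMr.
    by move=> _; rewrite galM // memvf.
  have e2 : t S = z ^+ m * S.
    rewrite rmorph_sum mulr_sumr /=; apply: eq_bigr => x xH.
    have [k hk] := cocycle xH (a0 i) (aNF i).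
    rewrite hk rmorphM rmorphXn /= (fixed_gal (subvf _) tH z_Fz) hm.
    by rewrite mulrCA.
  have zm1 : z ^+ m != 1 by apply: contraNneq ta => zm; rewrite hm zm mul1r.
  apply/eqP; move: e2; rewrite e1 => /eqP; rewrite -subr_eq0 -{1}[S]mul1r -mulrBl.
  by rewrite mulf_eq0 subr_eq0 eq_sym (negPf zm1).
have S2 i : i \in I -> \sum_(x in H) x (a i) = a i *+ #|H|.
  rewrite inE => aF; rewrite -sumr_const; apply: eq_bigr => x xH.
  exact: fixed_gal (subvf _) xH aF.
have tot : \sum_(i < s) \sum_(x in H) x (a i) = 1 *+ #|H|.
  rewrite exchange_big /= -sumr_const; apply: eq_bigr => x _.
  by rewrite -rmorph_sum /= asum rmorph1.
rewrite (bigID (mem I)) /= [X in _ + X]big1 ?addr0 in tot; last first.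
  by move=> i /S1.
rewrite (eq_bigr (fun i => a i *+ #|H|)) in tot; last by move=> i /S2.
rewrite sumrMnl in tot.
have HS : #|H| != 0%N by rewrite -lt0n; apply/card_gt0P; exists 1%g; apply: group1.
have sI : \sum_(i in I) a i = 1.
  apply/eqP; rewrite -subr_eq0; apply/eqP; move/eqP: tot; rewrite -subr_eq0 -mulrnBl.
  by rewrite -mulr_natr mulf_eq0 ((pcharf0P _).1 pcharL) (negPf HS) orbF => /eqP.
have sC : \sum_(i in ~: I) a i = 0.
  have -> : \sum_(i in ~: I) a i = \sum_(i < s | i \notin I) a i.
    by apply: eq_bigl => i; rewrite inE.
  move: asum; rewrite (bigID (mem I)) /= sI => /eqP.
  by rewrite -{2}[1]addr0 (inj_eq (addrI _)) => /eqP.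
have CI : ~: I == set0.
  apply/negPn/negP => C0; have [CT | CT] := eqVneq (~: I) setT.
    move: sI; have -> : I = set0 by rewrite -[I]setCK CT setCT.
    by rewrite big_set0 => /eqP; rewrite eq_sym oner_eq0.
  by move: (nd _ C0 CT); rewrite sC eqxx.
move=> i; have : i \notin ~: I by rewrite (eqP CI) inE.
by rewrite inE negbK inE.
Qed.


Lemma gal_z {x : gal_of {:L}} : x \in 'Gal({:L} / 1%AS)%g ->
  exists t, (0 < t)%N /\ x z = z ^+ t.
Proof.
move=> hx; have zN : z ^+ N \in (1%AS : {subfield L}) by rewrite prim_expr_order // mem1v.
have [k hk] := cocycle hx z_neq0 zN.
by exists k.+1; split => //; rewrite hk exprSr.
Qed.

Lemma gal_poly (x : gal_of {:L}) p w : x \in 'Gal({:L} / 1%AS)%g ->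
  x ((map_poly (in_alg L) p).[w]) = (map_poly (in_alg L) p).[x w].
Proof.
move=> hx; rewrite -horner_map /=; congr (_.[_]).
exact: fixedPoly_gal (sub1v _) hx (alg_polyOver _ p).
Qed.

Lemma gal_comm {x y : gal_of {:L}} {w} : x \in 'Gal({:L} / 1%AS)%g ->
  y \in 'Gal({:L} / 1%AS)%g -> w \in Fz -> x (y w) = y (x w).
Proof.
move=> hx hy /Fadjoin1_polyP [p ->].
rewrite !gal_poly //.
have [tx [_ ex]] := gal_z hx; have [ty [_ ey]] := gal_z hy.
by rewrite ex ey !rmorphXn /= ex ey -!exprM mulnC.
Qed.

Section StepB.
Variable a : L.
Hypotheses (a0 : a != 0) (aN : a ^+ N \in 1%VS) (aF : a \in Fz).

Definition Q e := exists m : nat, a ^+ e * z ^+ m \in 1%VS.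

Lemma Q0 : Q 0. Proof. by exists 0%N; rewrite !expr0 mulr1 mem1v. Qed.

Lemma QD e1 e2 : Q e1 -> Q e2 -> Q (e1 + e2).
Proof.
move=> [m1 h1] [m2 h2]; exists (m1 + m2)%N.
by rewrite !exprD mulrACA memvM.
Qed.

Lemma QB e1 e2 : (e2 <= e1)%N -> Q e1 -> Q e2 -> Q (e1 - e2).
Proof.
move=> le [m1 h1] [m2 h2]; exists (m1 + N.-1 * m2)%N.
have n2 : a ^+ e2 * z ^+ m2 != 0 by rewrite mulf_neq0 ?expf_neq0 ?z_neq0.
suff -> : a ^+ (e1 - e2) * z ^+ (m1 + N.-1 * m2) = (a ^+ e1 * z ^+ m1) / (a ^+ e2 * z ^+ m2).
  by rewrite memvM // memvV.
apply: (mulIf n2); rewrite divfK //.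
rewrite mulrACA -exprD subnK // -!exprD; congr (_ * _).
rewrite -addnA -{2}[m2]mul1n -mulnDl addn1 prednK ?N_gt0 //.
by rewrite exprD exprM (prim_expr_order pz) expr1n mulr1.
Qed.

Lemma QM k e : Q e -> Q (k * e).
Proof.
move=> he; elim: k => [|k IH]; first by rewrite mul0n; exact: Q0.
by rewrite mulSn; apply: QD.
Qed.

Lemma Qgcd e1 e2 : Q e1 -> Q e2 -> Q (gcdn e1 e2).
Proof.
move=> h1 h2; case: (posnP e1) => [->|p1]; first by rewrite gcd0n.
case: (egcdnP e2 p1) => km kn E _.
have -> : gcdn e1 e2 = (km * e1 - kn * e2)%N by rewrite E addKn.
by apply: QB; [rewrite E leq_addr | apply: QM | apply: QM].
Qed.


Lemma stepB lam : num_roots_of_unity K lam ->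
  exists m : nat, exists y : K, a ^+ lam * z ^+ m = y%:A.
Proof.
move=> hK.
have N0 := N_gt0.
pose Pb e := [exists m : 'I_N, a ^+ e * z ^+ m \in 1%VS].
have PbQ e : Pb e -> Q e by move=> /existsP [m h]; exists m.
have QPb e : Q e -> Pb e.
  move=> [m h]; apply/existsP; exists (Ordinal (ltn_pmod m N0)).
  by rewrite /= (prim_expr_mod pz).
have QN : Q N by exists 0%N; rewrite mulr1.
have ex : exists e, (0 < e)%N && Pb e by exists N; rewrite N0 QPb.
have [g /andP [g0 Pg] gmin] := ex_minnP ex.
have gdiv e : Q e -> (g %| e)%N.
  move=> he; have hq := @Qgcd g e (PbQ _ Pg) he.
  have gp : (0 < gcdn g e)%N by rewrite gcdn_gt0 g0.
  have h1 := gmin _ (introT andP (conj gp (QPb _ hq))).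
  have h2 : (gcdn g e <= g)%N by apply: dvdn_leq g0 (dvdn_gcdl g e).
  by apply/gcdn_idPl/eqP; rewrite eqn_leq h1 h2.
have gN := gdiv _ QN.
have Ng0 : (0 < N %/ g)%N by rewrite divn_gt0 // dvdn_leq.
have fixu (x : gal_of {:L}) : x \in 'Gal({:L} / 1%AS)%g ->
    x (z ^+ (N %/ g)) = z ^+ (N %/ g).
  move=> hx; have [t [t0 hz]] := gal_z hx.
  have [k hk] := cocycle hx a0 aN.
  have beta1 : a ^+ t / x a \in 1%VS.
    rewrite -(galois_fixedField galL); apply/fixedFieldP; first exact: memvf.
    move=> y hy; rewrite fmorph_div rmorphXn /= (gal_comm hy hx aF).
    have [j hj] := cocycle hy a0 aN.
    rewrite hj rmorphM rmorphXn /= hz exprMn -!exprM mulnC.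
    by rewrite invfM mulrACA divff ?mul1r // expf_neq0 ?z_neq0.
  have Qt : Q t.-1.
    exists (N.-1 * k)%N; suff -> : a ^+ t.-1 * z ^+ (N.-1 * k) = a ^+ t / x a by [].
    have n2 : x a != 0 by rewrite fmorph_eq0.
    apply: (mulIf n2); rewrite divfK // hk [z ^+ k * a]mulrC mulrACA -exprSr prednK //.
    rewrite -exprD -{2}[k]mul1n -mulnDl addn1 prednK // exprM (prim_expr_order pz).
    by rewrite expr1n mulr1.
  have gt := gdiv _ Qt.
  rewrite rmorphXn /= hz -exprM -{1}(prednK t0) mulSn exprD.
  rewrite -{1}(divnK gt) -mulnA [(g * _)%N]mulnC (divnK gN) mulnC exprM.
  by rewrite (prim_expr_order pz) expr1n mulr1.
have u1 : z ^+ (N %/ g) \in 1%VS.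
  rewrite -(galois_fixedField galL); apply/fixedFieldP; first exact: memvf.
  exact: fixu.
have [c hc] := vlineP _ _ u1.
have pu : g.-primitive_root (z ^+ (N %/ g)).
  have := exp_prim_root pz (N %/ g).
  have d1 : (N %/ g %| N)%N by rewrite -{2}(divnK gN) dvdn_mulr.
  by rewrite (gcdn_idPl d1) -{1}(divnK gN) mulKn.
have pc : g.-primitive_root c.
  by move: pu; rewrite hc -in_algE fmorph_primitive_root.
have glam := @rou_dvd K lam hK g c pc.
have [m hm] := @QM (lam %/ g) g (PbQ _ Pg).
rewrite (divnK glam) in hm.
have [y hy] := vlineP _ _ hm.
by exists m, y.
Qed.

End StepB.
End Core.

Section Build.
Variables (K : fieldType) (C : closedFieldType) (iota : {rmorphism K -> C}).
Hypothesis pchar0 : [pchar K] =i pred0.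
Hypothesis alg : forall x : C, exists p : {poly K}, p != 0 /\ root (map_poly iota p) x.

Lemma PET_K (s : seq C) :
  exists z, (exists a : nat ^ size s, z = \sum_(i < size s) s`_i *+ a i)
     /\ exists ps, s = [seq (map_poly iota p).[z] | p <- ps].
Proof.
elim: s => [|x s [z [[a Dz] [ps Ds]]]].
  by exists 0; split; [exists [ffun _ => 2%N]; rewrite big_ord0 | exists nil].
suffices [[n [|px [|pz []]]]// [Dpx Dpz]]:
  exists np, let zn := x *+ np.1 + z in
    [:: x; z] = [seq (map_poly iota p).[zn] | p <- np.2].
- exists (x *+ n + z); split.
    exists [ffun i => oapp a n (unlift ord0 i)].
    rewrite /= big_ord_recl ffunE unlift_none Dz; congr (_ + _).
    by apply: eq_bigr => i _; rewrite ffunE liftK.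
  exists (px :: [seq p \Po pz | p <- ps]); rewrite /= -Dpx; congr (_ :: _).
  rewrite -map_comp Ds; apply: eq_map => p /=.
  by rewrite map_comp_poly horner_comp -Dpz.
have [rx [nz_rx rx0]] := alg x.
have [rz [nz_rz rz0]] := alg (- z).
have [n [[pz Dpz] [px Dpx]]] := pchar0_PET nz_rz rz0 nz_rx rx0 pchar0.
by exists (n, [:: px; - pz]); rewrite /= !raddfN hornerN -[z]opprK Dpz Dpx.
Qed.


Lemma minpoly_K (x : C) : exists r : {poly K}, root (map_poly iota r) x /\ irreducible_poly r.
Proof.
have [p [p0 px]] := alg x.
move: {2}(size p) (leqnn (size p)) => n; elim: n p p0 px => [|n IH] p p0 px.
  by rewrite size_poly_leq0 (negPf p0).
move=> le.
case: (classic (exists q : {poly K}, [/\ root (map_poly iota q) x, q != 0 & (size q < size p)%N])).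
  by move=> [q [qx q0 lt]]; apply: (IH q q0 qx); rewrite -ltnS (leq_trans lt).
move=> nq; exists p; split => //.
apply/(subfx_irreducibleP px p0) => q qx q0; rewrite leqNgt; apply/negP => lt.
by apply: nq; exists q.
Qed.


Lemma build (xs : seq C) : exists (L : splittingFieldType K) (f : {rmorphism L -> C}),
  (forall c : K, f c%:A = iota c) /\ (forall x, x \in xs -> exists y, f y = x).
Proof.
have [P [P0 PR]] : exists P : {poly K}, P != 0 /\ forall x, x \in xs -> root (map_poly iota P) x.
  elim: xs => [|x t [P [P0 PR]]]; first by exists 1; split => //; rewrite oner_eq0.
  have [p [p0 px]] := alg x; exists (P * p); split; first by rewrite mulf_neq0.
  move=> y; rewrite inE rmorphM rootM => /orP [/eqP ->|/PR ->]; last by [].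
  by rewrite px orbT.
have [rts Dp] := closed_field_poly_normal (map_poly iota P).
have [z [[a Dz] [ps Ds]]] := PET_K rts.
have [r [rz0 irr_r]] := minpoly_K z.
pose L0 := SubFieldExtType rz0 irr_r.
pose f0 : {rmorphism L0 -> C} := @subfx_inj _ _ iota z r.
pose inL p := (map_poly (in_alg L0) p).[subfx_root iota z r].
have nz_r : r != 0 by apply: irredp_neq0.
have f0A b : f0 b%:A = iota b by apply: (subfx_inj_base rz0 nz_r).
have inLK p : f0 (inL p) = (map_poly iota p).[z].
  rewrite /inL -horner_map /= (subfx_inj_root rz0 nz_r).
  by rewrite -map_poly_comp; congr (_.[_]); apply: eq_map_poly => b /=; rewrite f0A.
have f0r : f0 (subfx_root iota z r) = z := subfx_inj_root rz0 nz_r.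
have Dys : map f0 (map inL ps) = rts.
  by rewrite Ds -map_comp; apply: eq_map => p; exact: (inLK p).
have szys : size (map inL ps) = size rts by rewrite -Dys !size_map.
have sroot : subfx_root iota z r = \sum_(i < size rts) (map inL ps)`_i *+ a i.
  apply: (fmorph_inj f0); rewrite f0r Dz rmorph_sum.
  apply: eq_bigr => i _; rewrite rmorphMn; congr (_ *+ _).
  case: i => k lt /=; by rewrite -[in LHS]Dys (nth_map 0) // szys.
have ax : splitting_field_axiom L0.
  exists (map_poly (in_alg L0) P); first exact: alg_polyOver.
  exists (map inL ps).
    rewrite -(eqp_map f0) -map_poly_comp.
    rewrite (eq_map_poly (g := iota)); last by move=> b /=; rewrite f0A.
    rewrite rmorph_prod.
    have -> : \prod_(y <- map inL ps) map_poly f0 ('X - y%:P) = \prod_(x <- rts) ('X - x%:P).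
      rewrite -Dys [in RHS]big_map; apply: eq_bigr => y _.
      by rewrite rmorphB /= map_polyX map_polyC.
    by rewrite Dp eqp_scale // lead_coef_eq0 map_poly_eq0.
  apply/vspaceP => x; rewrite memvf; have [p ->] := subfxEroot rz0 nz_r x.
  elim/poly_ind: p => [|p b IH]; first by rewrite rmorph0 horner0 mem0v.
  rewrite rmorphD rmorphM /= map_polyX map_polyC hornerMXaddC.
  apply: memvD; last by apply: memvZ; apply: (subvP (subv_adjoin_seq _ _)); apply: mem1v.
  apply: memvM => //; rewrite sroot; apply: rpred_sum => i _; apply: rpredMn.
  by apply: seqv_sub_adjoin; apply: mem_nth; rewrite szys.
pose L : splittingFieldType K := HB.pack L0 (FieldExt_isSplittingField.Build _ L0 ax).
exists L, f0; split; first exact: f0A.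
move=> x xx; have := PR x xx; rewrite Dp rootZ; last by rewrite lead_coef_eq0 map_poly_eq0.
rewrite root_prod_XsubC -Dys => /mapP [y _ ->]; by exists y.
Qed.

End Build.

Lemma prim_root_closed (C : closedFieldType) (pc : [pchar C] =i pred0) n :
  (0 < n)%N -> exists z : C, n.-primitive_root z.
Proof.
pose p : {poly C} := 'X^n - 1; have [r Dp] := closed_field_poly_normal p.
move=> n_gt0; rewrite (monicP _) ?monicXnsubC // scale1r in Dp.
have rn1: all n.-unity_root r by apply/allP=> z; rewrite -root_prod_XsubC -Dp.
have sz_r: (n < (size r).+1)%N.
  by rewrite -(size_prod_XsubC r id) -Dp size_XnsubC.
have [|z] := hasP (has_prim_root n_gt0 rn1 _ sz_r); last by exists z.
rewrite -separable_prod_XsubC -Dp separable_Xn_sub_1 //.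
by rewrite ((pcharf0P _).1 pc) -lt0n.
Qed.

Theorem corollary1p4 (K : fieldType) (Kbar : closedFieldType)
  (iota : {rmorphism K -> Kbar}) (lam : nat) (s : nat) (alpha : 'I_s -> Kbar) :
  [pchar K] =i pred0 ->
  fin_gen_field K ->
  is_alg_closure iota ->
  num_roots_of_unity K lam ->
  (forall i, in_Gamma iota (alpha i)) ->
  \sum_(i < s) alpha i = 1 ->
  (forall I : {set 'I_s}, I != set0 -> I != setT -> \sum_(i in I) alpha i != 0) ->
  exists xi : 'I_s -> Kbar,
    forall i, xi i != 0 /\ is_root_of_unity (xi i) /\
      exists y : K, alpha i ^+ lam * xi i = iota y.
Proof.
move=> pc0 _ halg hK hG hsum hnd.
have pcC : [pchar Kbar] =i pred0 by move=> p; rewrite (fmorph_pchar iota) pc0.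
have alg x : exists p : {poly K}, p != 0 /\ root (map_poly iota p) x.
  by have [p [p0 px]] := halg x; exists p.
have hex i : exists k : nat, (0 < k)%N /\ exists y : K, alpha i ^+ k = iota y.
  have [_ [k [k0 [y [_ hy]]]]] := hG i.
  by exists k; split => //; exists y.
have [n hn] := fin_all_exists hex.
pose N := (\prod_(i < s) n i)%N.
have N0 : (0 < N)%N by rewrite prodn_gt0 // => i; case: (hn i).
have hN i : exists b : K, alpha i ^+ N = iota b.
  have [_ [y hy]] := hn i.
  exists (y ^+ (\prod_(j < s | j != i) n j)%N).
  by rewrite /N (bigD1 i) //= exprM hy rmorphXn.
have [zeta pzeta] := @prim_root_closed Kbar pcC N N0.
have [L [f [fA fx]]] := @build K Kbar iota pc0 alg (zeta :: [seq alpha i | i <- enum 'I_s]).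
have [z' hz'] := fx zeta (mem_head _ _).
have hex2 i : exists y : L, f y = alpha i.
  apply: fx; by rewrite inE; apply/orP; right; apply: map_f; rewrite mem_enum.
have [a' ha'] := fin_all_exists hex2.
have pz' : N.-primitive_root z' by rewrite -(fmorph_primitive_root f) hz'.
have a0 i : a' i != 0.
  by rewrite -(fmorph_eq0 f) ha'; have [] := hG i.
have aN i : a' i ^+ N \in 1%VS.
  have [b hb] := hN i.
  have -> : a' i ^+ N = b%:A by apply: (fmorph_inj f); rewrite rmorphXn /= ha' hb fA.
  by apply: memvZ; apply: mem1v.
have fsum (I : pred 'I_s) : f (\sum_(i in I) a' i) = \sum_(i in I) alpha i.
  by rewrite rmorph_sum; apply: eq_bigr => i _; apply: ha'.
have asum : \sum_(i < s) a' i = 1.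
  by apply: (fmorph_inj f); rewrite rmorph1 -hsum -(fsum predT).
have nd (I : {set 'I_s}) : I != set0 -> I != setT -> \sum_(i in I) a' i != 0.
  by move=> I0 IT; rewrite -(fmorph_eq0 f) fsum; apply: hnd.
have aF := @stepA K L pc0 N z' pz' s a' a0 aN asum nd.
suff hex3 i : exists xi : Kbar, xi != 0 /\ is_root_of_unity xi /\
    exists y : K, alpha i ^+ lam * xi = iota y.
  exact: fin_all_exists hex3.
have [m [y hy]] := @stepB K L pc0 N z' pz' (a' i) (a0 i) (aN i) (aF i) lam hK.
exists (zeta ^+ m); split.
  by rewrite expf_neq0 // (@rou_neq0 _ _ _ N0 (prim_expr_order pzeta)).
split.
  exists N; split => //; by rewrite -exprM mulnC exprM (prim_expr_order pzeta) expr1n.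
by exists y; rewrite -ha' -hz' -rmorphXn -rmorphXn -rmorphM hy fA.
Qed.
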